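(* Let $v_1,\ldots,v_r\in\mathbb{Z}^n$ with $\sum_i v_i=0$ and $\mathbf{a}\in\mathbb{Z}^r$ be such that $P=\bigcap_i\{x:\langle v_i,x\rangle+a_i\ge 0\}$ is compact and each hyperplane $\{\langle v_i,x\rangle+a_i=0\}$ meets $P$. Then for every $x\in L$, \[ \lim_{k\to\infty}\frac{\phi_{k\mathbf{a}}(km_{\mathbf{a}})}{\phi_{k\mathbf{a}}(km_{\mathbf{a}}+\sqrt{k}x)}=e^{-\frac12\sum_{i\in I_{\mathbf{a}}}\frac{\langle v_i,x\rangle^2}{\langle v_i,m_{\mathbf{a}}\rangle+a_i}}. \] Moreover, for every $0<c<\frac16$ there are constants $C>0$ and $K$ such that for all integers $k\ge K$ and all $x\in L$ with $|x|<k^c$, \[ \left|\frac{\phi_{k\mathbf{a}}(km_{\mathbf{a}})}{\phi_{k\mathbf{a}}(km_{\mathbf{a}}+\sqrt{k}x)}\sqrt{\prod_{i\in I_{\mathbf{a}}}\frac{\langle v_i,km_{\mathbf{a}}\rangle+ka_i}{\langle v_i,km_{\mathbf{a}}+\sqrt{k}x\rangle+ka_i}}-e^{-\frac12\sum_{i\in I_{\mathbf{a}}}\frac{\langle v_i,x\rangle^2}{\langle v_i,m_{\mathbf{a}}\rangle+a_i}}\right|\le C\,e^{-\frac12\sum_{i\in I_{\mathbf{a}}}\frac{\langle v_i,x\rangle^2}{\langle v_i,m_{\mathbf{a}}\rangle+a_i}}\,k^{3c-\frac12}. \]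
   Context: $L$ is the linear subspace of $\mathbb{R}^n$ spanned by all differences of points of $P$. $I_{\mathbf{a}}$ is the set of indices $i$ such that $\langle v_i,\cdot\rangle$ is not constant on $P$. For an integer $k\ge1$, $\phi_{k\mathbf{a}}$ is defined on $kP$ by $\phi_{k\mathbf{a}}(y)=\prod_{i=1}^r(\langle v_i,y\rangle+ka_i)^{\langle v_i,y\rangle+ka_i}$ with $0^0=1$; $\phi_{\mathbf{a}}$ is the case $k=1$. $m_{\mathbf{a}}$ is the unique minimizer of $\phi_{\mathbf{a}}$ on $P$; it lies in the relative interior of $P$, so $\langle v_i,m_{\mathbf{a}}\rangle+a_i>0$ for $i\in I_{\mathbf{a}}$, and for fixed $x\in L$ the point $km_{\mathbf{a}}+\sqrt{k}x$ lies in $kP$ for all sufficiently large $k$. *)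

(* Defs.v *)
From HB Require Import structures.
From mathcomp Require Import all_boot all_order all_algebra.
From mathcomp Require Import all_classical all_reals all_analysis.
Set Implicit Arguments. Unset Strict Implicit. Unset Printing Implicit Defensive.
Import Order.TTheory GRing.Theory Num.Theory.
Import numFieldNormedType.Exports.
Local Open Scope classical_set_scope.
Local Open Scope ring_scope.

Section Defs.
Variables (R : realType) (n r : nat).

Definition ip (v : 'I_n -> int) (x : 'rV[R]_n) : R :=
  \sum_(j < n) (v j)%:~R * x ord0 j.

Definition polP (v : 'I_r -> 'I_n -> int) (a : 'I_r -> int) : set 'rV[R]_n :=
  [set x | forall i, 0 <= ip (v i) x + (a i)%:~R].

Definition spanDiff (S : set 'rV[R]_n) : set 'rV[R]_n :=
  [set x | exists s : seq (R * ('rV[R]_n * 'rV[R]_n)),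
     (forall t, t \in s -> S t.2.1 /\ S t.2.2) /\
     x = \sum_(t <- s) t.1 *: (t.2.1 - t.2.2)].

Definition nonconst (v : 'I_r -> 'I_n -> int) (a : 'I_r -> int) (i : 'I_r) : Prop :=
  exists p q, polP v a p /\ polP v a q /\ ip (v i) p <> ip (v i) q.

(* phi_{k a}(y) = prod_i (<v_i,y> + k a_i)^(<v_i,y> + k a_i), with 0^0 = 1 *)
Definition phik (v : 'I_r -> 'I_n -> int) (a : 'I_r -> int) (k : nat)
  (y : 'rV[R]_n) : R :=
  \prod_(i < r) (let t := ip (v i) y + k%:R * (a i)%:~R in t `^ t).

Definition enorm (x : 'rV[R]_n) : R := Num.sqrt (\sum_(j < n) x ord0 j ^+ 2).

End Defs.
Arguments nonconst R {n r} v a i.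

(* Main.v *)
Require Import Defs.
From HB Require Import structures.
From mathcomp Require Import all_boot all_order all_algebra.
From mathcomp Require Import all_classical all_reals all_analysis.
From mathcomp Require Import ring lra.
Import Order.TTheory GRing.Theory Num.Theory.
Import numFieldNormedType.Exports.
Local Open Scope classical_set_scope.
Local Open Scope ring_scope.

Section Real.
Context {R : realType}.
Implicit Types s t u w x y : R.

Definition fl (t : R) := t * ln t.

Lemma powRtt t : t `^ t = expR (fl t).
Proof. rewrite /powR /fl; case: eqP => [->|_] //; by rewrite mul0r expR0. Qed.

Lemma ln_le {t} : 0 < t -> ln t <= t - 1.
Proof. move=> t0; have := @le_ln1Dx R (t - 1); rewrite [1 + _]addrC subrK; apply; lra. Qed.

Lemma ln_ge {t} : 0 < t -> 1 - t^-1 <= ln t.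
Proof.
move=> t0; have := @ln_le (t^-1); rewrite invr_gt0 => /(_ t0).
rewrite lnV ?posrE //; lra.
Qed.

Lemma fl_tangent {w t} : 0 < w -> 0 <= t -> fl w + (t - w) * (ln w + 1) <= fl t.
Proof.
move=> w0; rewrite le_eqVlt => /orP[/eqP<-|t0].
  rewrite /fl !mul0r; nra.
have := ln_ge (divr_gt0 t0 w0); rewrite ln_div ?posrE // invf_div => h.
rewrite /fl.
have : t * (1 - w / t) <= t * (ln t - ln w) by rewrite ler_pM2l.
rewrite mulrBr mulr1 mulrCA divff ?gt_eqF // mulr1; nra.
Qed.

Lemma fl_quad {s h} : 0 < s -> 0 < s + h -> fl (s + h) <= fl s + h * (ln s + 1) + h ^+ 2 / s.
Proof.
move=> s0 sh0; have := ln_le (divr_gt0 sh0 s0); rewrite ln_div ?posrE // => e.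
have : (s + h) * (ln (s + h) - ln s) <= (s + h) * ((s + h) / s - 1) by rewrite ler_pM2l.
have -> : (s + h) * ((s + h) / s - 1) = h + h ^+ 2 / s by field; rewrite gt_eqF.
rewrite /fl; nra.
Qed.

Lemma fl_convex s d l : 0 <= s -> 0 <= d -> 0 < l < 1 ->
  fl ((1 - l) * s + l * d) <= (1 - l) * fl s + l * fl d.
Proof.
move=> s0 d0 /andP[l0 l1].
set w := (1 - l) * s + l * d.
have [w0|] := ltP 0 w.
  have h1 := fl_tangent w0 s0; have h2 := fl_tangent w0 d0.
  have : (1 - l) * (fl w + (s - w) * (ln w + 1)) + l * (fl w + (d - w) * (ln w + 1))
     <= (1 - l) * fl s + l * fl d.
    apply: lerD; apply: ler_wpM2l => //; lra.
  suff -> : (1 - l) * (fl w + (s - w) * (ln w + 1)) + l * (fl w + (d - w) * (ln w + 1)) = fl w by [].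
  rewrite /w; ring.
move=> w0; have ew : w = 0 by rewrite /w in w0 *; nra.
have es : s = 0 by rewrite /w in ew; nra.
have ed : d = 0 by rewrite /w in ew; nra.
rewrite ew es ed /fl !mul0r !mulr0; lra.
Qed.

End Real.

Section S.
Context {R : realType}.
Definition g (w : R) := fl w - (w - 1) - (w - 1) ^+ 2 / 2.
Lemma g_derive (w : R) : 0 < w -> is_derive w 1 g (ln w - (w - 1)).
Proof.
move=> w0.
have hl := is_derive1_ln w0.
rewrite /g /fl.
apply: is_derive_eq.
rewrite /GRing.scale /= mulr1 mulfV ?gt_eqF //; by field. Qed.

Lemma g_mvt (a b : R) : 0 < a -> a <= b ->
  exists2 c, a <= c <= b & g b - g a = (ln c - (c - 1)) * (b - a).
Proof.
move=> a0 ab.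
have := @MVT_segment R g (fun c => ln c - (c - 1)) a b ab.
case.
- move=> x; rewrite in_itv /= => /andP[ax _]; apply: g_derive; lra.
- apply: derivable_within_continuous => x; rewrite in_itv /= => /andP[ax _].
  have x0 : 0 < x by lra.
  by case: (@g_derive x x0).
move=> c; rewrite in_itv /= => hc e; by exists c.
Qed.

Lemma dg_bound (c : R) : 2^-1 <= c -> `|ln c - (c - 1)| <= 2 * (c - 1) ^+ 2.
Proof.
move=> c2; have c0 : 0 < c by lra.
have h1 := ln_le c0; have h2 := ln_ge c0.
have h3 : c - 1 - (1 - c^-1) = (c - 1) ^+ 2 / c by field; rewrite gt_eqF.
have h4 : (c - 1) ^+ 2 / c <= 2 * (c - 1) ^+ 2.
  rewrite ler_pdivrMr // ; have : 0 <= (c - 1) ^+ 2 by rewrite sqr_ge0.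
  nra.
rewrite ler0_norm; lra.
Qed.

Lemma g1 : g 1 = 0.
Proof. rewrite /g /fl ln1; ring. Qed.

Lemma g_bound (w : R) : 2^-1 <= w -> `|g w| <= 2 * `|w - 1| ^+ 3.
Proof.
move=> w2.
have [w1|w1] := leP 1 w.
  have [c /andP[c1 cw] e] := @g_mvt 1 w ltr01 w1.
  rewrite g1 subr0 in e; rewrite e normrM (ger0_norm (x:=w-1)); last lra.
  have h := @dg_bound c ltac:(lra).
  have hc : (c - 1) ^+ 2 <= (w - 1) ^+ 2 by nra.
  rewrite exprSr mulrA; apply: ler_pM; [by []|lra| |by []].
  apply: le_trans h _; lra.
have w0 : 0 < w by lra.
have [c /andP[c1 cw] e] := @g_mvt w 1 w0 (ltW w1).
rewrite g1 sub0r in e.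
have -> : g w = - ((ln c - (c - 1)) * (1 - w)) by rewrite -e opprK.
rewrite normrN normrM (ger0_norm (x:=1-w)); last lra.
rewrite (ltr0_norm (x:=w-1)); last lra.
have h := @dg_bound c ltac:(lra).
have hc : (c - 1) ^+ 2 <= (w - 1) ^+ 2 by nra.
have -> : - (w - 1) = 1 - w by rewrite opprB.
rewrite exprSr mulrA; apply: ler_wpM2r; first lra.
apply: le_trans h _; have : (w-1)^+2 = (1-w)^+2 by rewrite -sqrrN opprB.
lra.
Qed.
End S.

Section S.
Context {R : realType}.

Lemma exp_near1 (z : R) : `|z| <= 2^-1 -> `|expR z - 1| <= 2 * `|z|.
Proof.
move=> hz.
have e0 := expR_gt0 z.
have h1 := expR_ge1Dx z.
have h2 := expR_ge1Dx (- z).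
have h3 : expR z * expR (- z) = 1 by rewrite -expRD subrr expR0.
have h4 : expR z * (1 - z) <= 1.
  by rewrite -h3; apply: ler_wpM2l; [exact: ltW | lra].
have hz' : -2^-1 <= z <= 2^-1 by rewrite -ler_norml.
case/andP: hz' => hz1 hz2.
have e2 : expR z <= 2 by nra.
have [z0|z0] := leP 0 z.
  rewrite (ger0_norm z0) ger0_norm; nra.
rewrite (ltr0_norm z0); rewrite ler_norml; apply/andP; split; nra.
Qed.

Lemma ln_near1 (y : R) : `|y| <= 2^-1 -> `|ln (1 + y)| <= 2 * `|y|.
Proof.
move=> hy.
have hy' : -2^-1 <= y <= 2^-1 by rewrite -ler_norml.
case/andP: hy' => hy1 hy2.
have p0 : 0 < 1 + y by lra.
have h1 := ln_le p0.
have h2 := ln_ge p0.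
set q := (1 + y)^-1 in h2.
have hq : q * (1 + y) = 1 by rewrite /q mulVf ?gt_eqF.
have q0 : 0 < q by rewrite /q invr_gt0.
have [y0|y0] := leP 0 y.
  rewrite (ger0_norm y0) ler_norml; apply/andP; split; nra.
rewrite (ltr0_norm y0) ler_norml; apply/andP; split; nra.
Qed.

Lemma term_id (rho s u : R) : 0 < rho -> 0 < s -> 0 < 1 + u / (rho * s) ->
  fl (rho ^+ 2 * s) - fl (rho ^+ 2 * s + rho * u) =
  - (rho * u * (ln (rho ^+ 2) + ln s + 1))
  - (u ^+ 2 / s / 2 + rho ^+ 2 * s * g (1 + u / (rho * s))).
Proof.
move=> r0 s0 w0.
set w := 1 + u / (rho * s).
have ew : rho ^+ 2 * s + rho * u = rho ^+ 2 * s * w.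
  rewrite /w; field; rewrite ?gt_eqF //.
have r20 : 0 < rho ^+ 2 by rewrite exprn_gt0.
rewrite ew /g /fl !lnM ?posrE ?mulr_gt0 //.
rewrite /w; field; rewrite ?gt_eqF //.
Qed.
End S.

Section Est.
Context {R : realType} {r : nat} (P : pred 'I_r) (s u : 'I_r -> R).
Hypothesis hsP : forall i, P i -> 0 < s i.
Hypothesis hnP : forall i, ~~ P i -> s i = 0 /\ u i = 0.
Hypothesis hu0 : \sum_i u i = 0.
Hypothesis hul : \sum_i u i * ln (s i) = 0.

Lemma sum_ge_term {F : 'I_r -> R} {i} : (forall j, P j -> 0 <= F j) -> P i ->
  F i <= \sum_(j < r | P j) F j.
Proof.
move=> F0 Pi; rewrite (bigD1 i) //= lerDl; apply: sumr_ge0 => j /andP[Pj _].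
exact: F0.
Qed.

Lemma est (rho : R) : 0 < rho ->
  \sum_(i < r | P i) (`|u i| ^+ 3 / (s i ^+ 2 * rho) + `|u i| / (s i * rho)) <= 4^-1 ->
  let d := \sum_(i < r | P i) (`|u i| ^+ 3 / (s i ^+ 2 * rho) + `|u i| / (s i * rho)) in
  let E := expR (- 2^-1 * \sum_(i < r | P i) (u i ^+ 2 / s i)) in
  let rat := expR (\sum_i fl (rho ^+ 2 * s i)) /
             expR (\sum_i fl (rho ^+ 2 * s i + rho * u i)) in
  `|rat - E| <= 4 * E * d /\
  `|rat * Num.sqrt (\prod_(i < r | P i) ((rho ^+ 2 * s i) / (rho ^+ 2 * s i + rho * u i))) - E|
    <= 4 * E * d.
Proof.
move=> r0 hd d E rat.
have {}hd : d <= 4^-1 := hd.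
set y := fun i => u i / (rho * s i).
set a := fun i => `|u i| ^+ 3 / (s i ^+ 2 * rho).
set b := fun i => `|u i| / (s i * rho).
have a0 : forall i, P i -> 0 <= a i.
  move=> i Pi; rewrite /a divr_ge0 // ?exprn_ge0 // mulr_ge0 // ?exprn_ge0 // ltW //.
  exact: hsP.
have b0 : forall i, P i -> 0 <= b i.
  move=> i Pi; rewrite /b divr_ge0 // mulr_ge0 // ltW //; exact: hsP.
have ab0 : forall i, P i -> 0 <= a i + b i by move=> i Pi; rewrite addr_ge0 ?a0 ?b0.
have d0 : 0 <= d by apply: sumr_ge0 => i Pi; exact: ab0.
have hyb : forall i, P i -> `|y i| = b i.
  move=> i Pi; rewrite /y /b normrM normfV (gtr0_norm (mulr_gt0 r0 (hsP i Pi))) .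
  by rewrite [rho * _]mulrC.
have hy : forall i, P i -> `|y i| <= 4^-1.
  move=> i Pi; rewrite hyb //; apply: le_trans hd.
  apply: le_trans (sum_ge_term ab0 Pi); rewrite lerDr; exact: a0.
have w0 : forall i, P i -> 0 < 1 + y i.
  move=> i /hy; rewrite ler_norml => /andP[h _]; lra.
set e1 := \sum_(i < r | P i) (rho ^+ 2 * s i * g (1 + y i)).
have key : \sum_i fl (rho ^+ 2 * s i) - \sum_i fl (rho ^+ 2 * s i + rho * u i)
   = - 2^-1 * \sum_(i < r | P i) (u i ^+ 2 / s i) - e1.
  rewrite -sumrB.
  transitivity (\sum_i (- (rho * u i * (ln (rho ^+ 2) + ln (s i) + 1))
       - (if P i then u i ^+ 2 / s i / 2 + rho ^+ 2 * s i * g (1 + y i) else 0))).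
    apply: eq_bigr => i _; case: (boolP (P i)) => Pi.
      by rewrite (term_id _ _ _ r0 (hsP i Pi) (w0 i Pi)).
    have [-> ->] := hnP i Pi; rewrite /fl !mulr0 !addr0 mul0r; ring.
  rewrite sumrB -big_mkcond /= big_split /= /e1.
  have -> : \sum_i - (rho * u i * (ln (rho ^+ 2) + ln (s i) + 1)) = 0.
    rewrite sumrN.
    have -> : \sum_i rho * u i * (ln (rho ^+ 2) + ln (s i) + 1) =
      rho * (ln (rho ^+ 2) + 1) * \sum_i u i + rho * \sum_i u i * ln (s i).
      rewrite !mulr_sumr -big_split /=; apply: eq_bigr => i _; ring.
    by rewrite hu0 hul !mulr0 addr0 oppr0.
  rewrite sub0r mulNr mulr_sumr opprD; congr (_ - _); congr (- _).
  by apply: eq_bigr => i _; rewrite mulrC.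
have E0 : 0 < E by exact: expR_gt0.
have fin : forall z, `|z| <= 2 * d -> `|E * expR (- z) - E| <= 4 * E * d.
  move=> z hz.
  have -> : E * expR (- z) - E = E * (expR (- z) - 1) by ring.
  rewrite normrM (gtr0_norm E0).
  have -> : 4 * E * d = E * (4 * d) by ring.
  apply: ler_wpM2l; first exact: ltW.
  have hz2 : `|- z| <= 2^-1 by rewrite normrN; lra.
  apply: le_trans (@exp_near1 R (- z) hz2) _; rewrite normrN; lra.
have hg : forall i, P i -> `|rho ^+ 2 * s i * g (1 + y i)| <= 2 * a i.
  move=> i Pi.
  have hyi := hy i Pi.
  have := @g_bound R (1 + y i) ltac:(move: hyi; rewrite ler_norml => /andP[h1 h2]; lra).
  have -> : 1 + y i - 1 = y i by ring.
  rewrite hyb // => hgi.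
  have s0 := hsP i Pi.
  have c0 : 0 <= rho ^+ 2 * s i by apply: mulr_ge0; [rewrite exprn_ge0 // ltW | exact: ltW].
  rewrite normrM (ger0_norm c0); apply: le_trans (ler_wpM2l c0 hgi) _.
  rewrite /a /b le_eqVlt; apply/orP; left; apply/eqP; field.
  by rewrite ?gt_eqF.
have hrat : rat = E * expR (- e1) by rewrite /rat -expRB key expRD.
split.
  rewrite hrat; apply: fin; rewrite /e1 /d.
  apply: le_trans (ler_norm_sum _ _ _) _; rewrite mulr_sumr; apply: ler_sum => i Pi.
  apply: le_trans (hg i Pi) _; rewrite ler_pM2l // lerDl; exact: b0.
have hprod : \prod_(i < r | P i) ((rho ^+ 2 * s i) / (rho ^+ 2 * s i + rho * u i))
    = expR (- \sum_(i < r | P i) ln (1 + y i)).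
  rewrite -sumrN expR_sum; apply: eq_bigr => i Pi.
  have s0 := hsP i Pi; have w := w0 i Pi.
  rewrite expRN lnK ?posrE //.
  have rs : 0 < rho * s i := mulr_gt0 r0 s0.
  have p1 : 0 < rho * s i + u i.
    by have := mulr_gt0 rs w; rewrite /y mulrDr mulr1 mulrCA mulfV ?gt_eqF // mulr1.
  have p2 : 0 < rho ^+ 2 * s i + rho * u i.
    by have := mulr_gt0 r0 p1; rewrite mulrDr mulrA -expr2.
  rewrite /y; field; by rewrite ?gt_eqF ?p1 ?p2 ?r0 ?s0.
have hsq : forall z : R, Num.sqrt (expR z) = expR (z / 2).
  move=> z; have e : expR z = expR (z / 2) ^+ 2.
    by rewrite expr2 -expRD; congr expR; field.
  by rewrite e sqrtr_sqr gtr0_norm // expR_gt0.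
rewrite hprod hsq hrat -mulrA -expRD.
set e2 := \sum_(i < r | P i) (rho ^+ 2 * s i * g (1 + y i) + ln (1 + y i) / 2).
have -> : - e1 + - (\sum_(i < r | P i) ln (1 + y i)) / 2 = - e2.
  rewrite /e2 big_split /= -mulr_suml /e1; ring.
apply: fin; rewrite /e2 /d.
apply: le_trans (ler_norm_sum _ _ _) _; rewrite mulr_sumr; apply: ler_sum => i Pi.
apply: le_trans (ler_normD _ _) _.
have h1 := hg i Pi.
have h2 := @ln_near1 R (y i) ltac:(have := hy i Pi; lra).
rewrite hyb // in h2.
have b0i := b0 i Pi.
have h3 : `|ln (1 + y i) / 2| <= b i.
  rewrite normrM (ger0_norm (x:=2^-1)) //; lra.
have -> : 2 * (`|u i| ^+ 3 / (s i ^+ 2 * rho) + `|u i| / (s i * rho)) = 2 * (a i + b i) by [].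
lra.
Qed.
End Est.


Section Lin.
Context {R : realType} {n : nat}.
Implicit Types (x y : 'rV[R]_n) (w : 'I_n -> int).

Lemma ipD w x y : ip w (x + y) = ip w x + ip w y.
Proof. rewrite /ip -big_split /=; apply: eq_bigr => j _; by rewrite mxE mulrDr. Qed.

Lemma ipZ w (c : R) x : ip w (c *: x) = c * ip w x.
Proof. rewrite /ip mulr_sumr; apply: eq_bigr => j _; by rewrite mxE mulrCA. Qed.

Lemma ipN w x : ip w (- x) = - ip w x.
Proof. by rewrite -scaleN1r ipZ mulN1r. Qed.

Lemma ipB w x y : ip w (x - y) = ip w x - ip w y.
Proof. by rewrite ipD ipN. Qed.

Lemma ip_sum w (s : seq (R * ('rV[R]_n * 'rV[R]_n))) :
  ip w (\sum_(t <- s) t.1 *: (t.2.1 - t.2.2)) =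
  \sum_(t <- s) t.1 * (ip w t.2.1 - ip w t.2.2).
Proof.
elim: s => [|t s IH]; first by rewrite !big_nil /ip big1 // => j _; rewrite mxE mulr0.
by rewrite !big_cons ipD ipZ ipB IH.
Qed.

End Lin.

Section Poly.
Context {R : realType} {n r : nat} (v : 'I_r -> 'I_n -> int) (a : 'I_r -> int)
  (m : 'rV[R]_n).
Implicit Types (p q : 'rV[R]_n).
Hypothesis hsum : forall j : 'I_n, \sum_(i < r) v i j = 0.
Hypothesis hface : forall i : 'I_r, exists y : 'rV[R]_n, polP v a y /\ ip (v i) y + (a i)%:~R = 0.
Hypothesis hm_in : polP v a m.
Hypothesis hm_min : forall y, polP v a y -> phik v a 1 m <= phik v a 1 y.

Definition sv i := ip (v i) m + (a i)%:~R.
Definition FF (y : 'rV[R]_n) := \sum_i fl (ip (v i) y + (a i)%:~R).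

Lemma phikE (k : nat) (y : 'rV[R]_n) : phik v a k y = expR (\sum_i fl (ip (v i) y + k%:R * (a i)%:~R)).
Proof. rewrite /phik expR_sum; apply: eq_bigr => i _ /=; exact: powRtt. Qed.

Lemma FF_min (y : 'rV[R]_n) : polP v a y -> FF m <= FF y.
Proof.
move=> /hm_min; rewrite !phikE ler_expR /FF.
by under eq_bigr do rewrite mul1r; under [X in _ <= X]eq_bigr do rewrite mul1r.
Qed.

Lemma sv_ge0 i : 0 <= sv i.
Proof. exact: hm_in. Qed.

Lemma const_ip i : ~ nonconst R v a i ->
  forall p q, polP v a p -> polP v a q -> ip (v i) p = ip (v i) q.
Proof.
move=> nc p q pP qP; case: (eqVneq (ip (v i) p) (ip (v i) q)) => // h.
by exfalso; apply: nc; exists p, q; split => //; split => //; apply/eqP.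
Qed.

Lemma sv_const i : ~ nonconst R v a i -> sv i = 0.
Proof.
move=> nc; have [y [yP hy]] := hface i.
by rewrite /sv (const_ip _ nc _ _ hm_in yP).
Qed.

Lemma u_const i (x : 'rV[R]_n) : ~ nonconst R v a i -> spanDiff (polP v a) x -> ip (v i) x = 0.
Proof.
move=> nc [s [hs ->]]; rewrite ip_sum big_seq big1 // => t /hs [h1 h2].
by rewrite (const_ip _ nc _ _ h1 h2) subrr mulr0.
Qed.

Lemma sum_u (x : 'rV[R]_n) : \sum_i ip (v i) x = 0.
Proof.
rewrite /ip exchange_big /= big1 // => j _.
by rewrite -mulr_suml -mulrz_sumr hsum mul0r.
Qed.


Lemma sv_pos i : nonconst R v a i -> 0 < sv i.
Proof.
move=> [p [q [pP [qP hpq]]]].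
rewrite lt_def sv_ge0 andbT; apply/negP => /eqP s0.
have [p' [p'P dpos]] : exists p', polP v a p' /\ 0 < ip (v i) p' + (a i)%:~R.
  have hp := pP i; have hq := qP i.
  case: (ltP 0 (ip (v i) p + (a i)%:~R)) => h; first by exists p.
  exists q; split => //; rewrite lt_def hq andbT; apply/negP => /eqP h2.
  apply: hpq; lra.
set d := ip (v i) p' + (a i)%:~R.
set K := `|FF m| + `|FF p'| + 1.
have K0 : 0 < K by rewrite /K; have := normr_ge0 (FF m); have := normr_ge0 (FF p'); lra.
set l := expR (- K / d).
have l0 : 0 < l by exact: expR_gt0.
have l1 : l < 1 by rewrite /l expR_lt1 mulNr oppr_lt0 divr_gt0.
have lnl : d * ln l = - K by rewrite /l expRK; field; rewrite gt_eqF.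
set z := (1 - l) *: m + l *: p'.
have ez : forall j, ip (v j) z + (a j)%:~R =
    (1 - l) * sv j + l * (ip (v j) p' + (a j)%:~R).
  by move=> j; rewrite ipD !ipZ /sv; ring.
have zP : polP v a z.
  move=> j; rewrite ez; have := hm_in j; have := p'P j; rewrite -/(sv j) => h1 h2.
  apply: addr_ge0; apply: mulr_ge0 => //; lra.
have hF := FF_min _ zP.
have hz : FF z <= (1 - l) * FF m + l * FF p' + l * d * ln l.
  apply: (@le_trans _ _ (\sum_j ((1 - l) * fl (sv j) + l * fl (ip (v j) p' + (a j)%:~R)
       + (if j == i then l * d * ln l else 0)))).
    apply: ler_sum => j _; rewrite ez.
    case: eqP => [->|ji].
      rewrite s0 -/d /fl mulr0 add0r mul0r mulr0 add0r lnM ?posrE //; nra.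
    rewrite addr0; apply: fl_convex; [exact: sv_ge0 | exact: p'P | by rewrite l0 l1].
  rewrite big_split big_split /= -!mulr_sumr -big_mkcond big_pred1_eq /FF.
  by rewrite -/(sv _).
have : l * (FF m - FF p' + K) <= 0.
  have e : l * d * ln l = - (l * K) by rewrite -mulrA lnl mulrN.
  rewrite e in hz; nra.
rewrite pmulr_rle0 // => h.
have := ler_norm (FF p'); have := lerNnormlW (lexx `|FF m|).
rewrite /K in h; lra.
Qed.


Lemma foc (x : 'rV[R]_n) : spanDiff (polP v a) x -> \sum_i ip (v i) x * ln (sv i) = 0.
Proof.
move=> xL.
set u := fun i => ip (v i) x.
have hnP : forall i, ~ nonconst R v a i -> sv i = 0 /\ u i = 0.
  by move=> i nc; split; [exact: sv_const | exact: u_const].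
set G := \sum_i u i * ln (sv i).
set H := \sum_i u i ^+ 2 / sv i.
have H0 : 0 <= H by apply: sumr_ge0 => i _; rewrite divr_ge0 ?sqr_ge0 ?sv_ge0.
set S := \sum_(i < r | `[< nonconst R v a i >]) `|u i| / sv i.
have S0 : 0 <= S by apply: sumr_ge0 => i /asboolP /(sv_pos _) h; rewrite divr_ge0 // ltW.
set mu := (1 + S)^-1.
have mu0 : 0 < mu by rewrite invr_gt0; lra.
have hmu : forall i, nonconst R v a i -> mu * `|u i| < sv i.
  move=> i nci; have s0 := sv_pos _ nci.
  have : `|u i| / sv i <= S.
    rewrite /S (bigD1 i) /=; last exact/asboolP.
    rewrite lerDl; apply: sumr_ge0 => j /andP[/asboolP /(sv_pos _) h _]; by rewrite divr_ge0 // ltW.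
  rewrite ler_pdivrMr // => h.
  rewrite /mu mulrC -/(_ / _) ltr_pdivrMr; last lra.
  nra.
have key : forall l, `|l| <= mu -> 0 <= l * G + l ^+ 2 * H.
  move=> l hl.
  set z := m + l *: x.
  have ez : forall j, ip (v j) z + (a j)%:~R = sv j + l * u j.
    by move=> j; rewrite ipD ipZ /sv /u; ring.
  have hterm : forall j, (nonconst R v a j /\ 0 < sv j + l * u j) \/ (sv j = 0 /\ u j = 0).
    move=> j; case: (pselect (nonconst R v a j)) => nc; last by right; exact: hnP.
    left; split => //; have := hmu j nc; have := ler_norm (l * u j).
    rewrite normrM => h1 h2.
    have : `|l| * `|u j| <= mu * `|u j| by apply: ler_wpM2r.
    have := lerNnormlW (lexx `|l * u j|); rewrite normrM; lra.
  have zP : polP v a z.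
    move=> j; rewrite ez; case: (hterm j) => [[_ h]|[-> ->]]; lra.
  have hF := FF_min _ zP.
  have hz : FF z <= FF m + l * G + l * \sum_i u i + l ^+ 2 * H.
    rewrite /FF /G /H !mulr_sumr -!big_split /=.
    apply: ler_sum => j _; rewrite ez.
    case: (hterm j) => [[nc h]|[e1 e2]].
      have s0 := sv_pos _ nc.
      have := fl_quad s0 h; rewrite -/(sv j).
      have -> : (l * u j) ^+ 2 / sv j = l ^+ 2 * (u j ^+ 2 / sv j) by rewrite exprMn -mulrA.
      have -> : l * u j * (ln (sv j) + 1) = l * (u j * ln (sv j)) + l * u j by ring.
      lra.
    by rewrite -/(sv j) e1 e2 /fl !(mulr0, mul0r, add0r, addr0, expr0n).
  have su : \sum_i u i = 0 by exact: sum_u.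
  rewrite su mulr0 addr0 in hz; lra.
have [//|G0] := eqVneq G 0.
exfalso.
have A0 : 0 < `|G| by rewrite normr_gt0.
set D := `|G| + mu * H.
have muH : 0 <= mu * H by rewrite mulr_ge0 // ltW.
have D0 : 0 < D by rewrite /D; lra.
set nu := mu * `|G| / D.
have nu0 : 0 < nu by rewrite /nu divr_gt0 // mulr_gt0.
have nuD : nu * D = mu * `|G| by rewrite /nu divfK // gt_eqF.
have numu : nu <= mu.
  have : nu * D <= mu * D by rewrite nuD; apply: ler_wpM2l; [exact: ltW | rewrite /D; lra].
  by rewrite ler_pM2r.
have k1 := key nu ltac:(rewrite gtr0_norm //).
have k2 := key (- nu) ltac:(rewrite normrN gtr0_norm //).
rewrite sqrrN in k2.
have h1 : nu * `|G| <= nu ^+ 2 * H.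
  case: (ger0P G) => hG; lra.
have h2 : `|G| <= nu * H.
  by rewrite -(ler_pM2l nu0) mulrA -expr2.
have h3 : `|G| * D <= mu * `|G| * H.
  rewrite -nuD; have := ler_wpM2r (ltW D0) h2; lra.
rewrite /D in h3; nra.
Qed.

End Poly.


Lemma enorm_ge {R : realType} {n : nat} (x : 'rV[R]_n) j : `|x ord0 j| <= enorm x.
Proof.
rewrite /enorm -sqrtr_sqr ler_sqrt; last by apply: sumr_ge0 => i _; rewrite sqr_ge0.
by rewrite (bigD1 j) //= lerDl; apply: sumr_ge0 => i _; rewrite sqr_ge0.
Qed.

Lemma ip_bound {R : realType} {n : nat} (w : 'I_n -> int) (x : 'rV[R]_n) :
  `|ip w x| <= (\sum_j `|(w j)%:~R : R|) * enorm x.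
Proof.
rewrite /ip mulr_suml; apply: le_trans (ler_norm_sum _ _ _) _.
apply: ler_sum => j _; rewrite normrM; apply: ler_wpM2l => //; exact: enorm_ge.
Qed.

Lemma ratioE {R : realType} {n r : nat} (v : 'I_r -> 'I_n -> int) (a : 'I_r -> int)
  (m x : 'rV[R]_n) (k : nat) :
  let rho := Num.sqrt (k%:R : R) in
  phik v a k (k%:R *: m) / phik v a k (k%:R *: m + rho *: x) =
  expR (\sum_i fl (rho ^+ 2 * sv v a m i)) /
  expR (\sum_i fl (rho ^+ 2 * sv v a m i + rho * ip (v i) x)).
Proof.
move=> rho; have e : rho ^+ 2 = k%:R by rewrite sqr_sqrtr.
rewrite !phikE e /sv; congr (expR _ / expR _); apply: eq_bigr => i _.
  by rewrite ipZ; congr fl; ring.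
by rewrite ipD !ipZ; congr fl; ring.
Qed.

Theorem mainTheorem3 (R : realType) (n r : nat)
  (v : 'I_r -> 'I_n -> int) (a : 'I_r -> int) (m : 'rV[R]_n)
  (hsum : forall j : 'I_n, \sum_(i < r) v i j = 0)
  (hcpt : compact (polP (R:=R) v a))
  (hface : forall i : 'I_r, exists y : 'rV[R]_n, polP v a y /\ ip (v i) y + (a i)%:~R = 0)
  (hm_in : polP v a m)
  (hm_min : forall y, polP v a y -> phik v a 1 m <= phik v a 1 y) :
  let E := fun x : 'rV[R]_n =>
    expR (- (2%:R^-1) * \sum_(i < r | `[< nonconst R v a i >])
            (ip (v i) x ^+ 2 / (ip (v i) m + (a i)%:~R))) in
  let ratio := fun (k : nat) (x : 'rV[R]_n) =>
    phik v a k (k%:R *: m) / phik v a k (k%:R *: m + Num.sqrt k%:R *: x) in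
  (forall x, spanDiff (polP v a) x ->
     (fun k : nat => ratio k x) @ \oo --> E x) /\
  (forall c : R, 0 < c -> c < 6%:R^-1 ->
     exists C : R, 0 < C /\ exists K : nat,
       forall (k : nat) (x : 'rV[R]_n), (K <= k)%N ->
         spanDiff (polP v a) x -> enorm x < k%:R `^ c ->
         `| ratio k x *
             Num.sqrt (\prod_(i < r | `[< nonconst R v a i >])
               ((ip (v i) (k%:R *: m) + k%:R * (a i)%:~R) /
                (ip (v i) (k%:R *: m + Num.sqrt k%:R *: x) + k%:R * (a i)%:~R)))
           - E x |
         <= C * E x * k%:R `^ (3%:R * c - 2%:R^-1)).
Proof.
move=> E ratio.
set P := fun i => `[< nonconst R v a i >].
set s := sv v a m.
have hsP : forall i, P i -> 0 < s i.
  by move=> i /asboolP; apply: (@sv_pos _ _ _ v a m hm_in hm_min).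
have hnP : forall x : 'rV[R]_n, spanDiff (polP v a) x ->
    forall i, ~~ P i -> s i = 0 /\ ip (v i) x = 0.
  move=> x xL i nP; have nc : ~ nonconst R v a i by apply/asboolPn.
  split; first exact: (@sv_const _ _ _ v a m hface hm_in i nc).
  exact: (@u_const _ _ _ v a i x nc xL).
have hu0 : forall x : 'rV[R]_n, \sum_i ip (v i) x = 0 by move=> x; exact: (@sum_u _ _ _ v hsum x).
have hul : forall x : 'rV[R]_n, spanDiff (polP v a) x -> \sum_i ip (v i) x * ln (s i) = 0.
  by move=> x xL; exact: (@foc _ _ _ v a m hsum hface hm_in hm_min x xL).
have EE : forall x : 'rV[R]_n, E x = expR (- 2^-1 * \sum_(i < r | P i) (ip (v i) x ^+ 2 / s i)) by [].
have hest : forall (k : nat) (x : 'rV[R]_n), spanDiff (polP v a) x -> (0 < k)%N ->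
  let rho := Num.sqrt (k%:R : R) in
  let d := \sum_(i < r | P i) (`|ip (v i) x| ^+ 3 / (s i ^+ 2 * rho) + `|ip (v i) x| / (s i * rho)) in
  d <= 4^-1 ->
  `|ratio k x - E x| <= 4 * E x * d /\
  `|ratio k x * Num.sqrt (\prod_(i < r | `[< nonconst R v a i >])
               ((ip (v i) (k%:R *: m) + k%:R * (a i)%:~R) /
                (ip (v i) (k%:R *: m + Num.sqrt k%:R *: x) + k%:R * (a i)%:~R))) - E x|
     <= 4 * E x * d.
  move=> k x xL k0 rho d hd.
  have r0 : 0 < rho by rewrite sqrtr_gt0 ltr0n.
  have := @est _ _ P s (fun i => ip (v i) x) hsP (hnP x xL) (hu0 x) (hul x xL) rho r0 hd.
  rewrite /= -/d -EE /ratio ratioE -/rho.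
  have -> : \prod_(i < r | `[< nonconst R v a i >])
               ((ip (v i) (k%:R *: m) + k%:R * (a i)%:~R) /
                (ip (v i) (k%:R *: m + rho *: x) + k%:R * (a i)%:~R)) =
            \prod_(i < r | P i) (rho ^+ 2 * s i / (rho ^+ 2 * s i + rho * ip (v i) x)).
    have e : rho ^+ 2 = k%:R by rewrite sqr_sqrtr.
    apply: eq_bigr => i _; rewrite e /s /sv ipD !ipZ; congr (_ / _); ring.
  by [].
have E0 : forall x, 0 < E x by move=> x; exact: expR_gt0.
split.
  move=> x xL.
  set u := fun i => ip (v i) x.
  set D := \sum_(i < r | P i) (`|u i| ^+ 3 / s i ^+ 2 + `|u i| / s i).
  have D0 : 0 <= D.
    apply: sumr_ge0 => i Pi; have s0 := hsP i Pi.
    by rewrite addr_ge0 // divr_ge0 // ?exprn_ge0 // ltW.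
  apply/cvgrPdist_le => e e0.
  have Ex0 := E0 x.
  have q0 : 0 <= 4 * E x * D / e by rewrite divr_ge0 ?mulr_ge0 // ltW.
  set M := 4 * D + 4 * E x * D / e + 1.
  have M1 : 1 <= M by rewrite /M; lra.
  have M20 : 0 <= M ^+ 2 by rewrite sqr_ge0.
  exists (Num.bound (M ^+ 2)); first by [].
  move=> k /= hk.
  have kM : M ^+ 2 < k%:R.
    by apply: lt_le_trans (archi_boundP M20) _; rewrite ler_nat.
  have M2 : 1 <= M ^+ 2 by rewrite expr2; nra.
  have k0 : (0 < k)%N by rewrite -(ltr0n R); lra.
  set rho := Num.sqrt (k%:R : R).
  have rM : M <= rho.
    have : Num.sqrt (M ^+ 2) <= rho by rewrite ler_sqrt // ltW.
    by rewrite sqrtr_sqr ger0_norm //; lra.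
  have r0 : 0 < rho by lra.
  have dE : \sum_(i < r | P i) (`|ip (v i) x| ^+ 3 / (s i ^+ 2 * rho) + `|ip (v i) x| / (s i * rho))
      = D / rho.
    rewrite /D mulr_suml; apply: eq_bigr => i Pi; have s0 := hsP i Pi.
    rewrite /u; field; by rewrite ?gt_eqF ?s0 ?r0.
  have hd : D / rho <= 4^-1.
    rewrite ler_pdivrMr //; have hM : M = 4 * D + 4 * E x * D / e + 1 by []; lra.
  have := hest k x xL k0; rewrite /= -/rho dE => /(_ hd) [h1 _].
  rewrite distrC; apply: le_trans h1 _.
  rewrite mulrA ler_pdivrMr //.
  have eM : e * M = 4 * e * D + 4 * E x * D + e.
    by rewrite /M; field; rewrite gt_eqF.
  have : e * M <= e * rho by rewrite ler_wpM2l // ltW.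
  have : 0 <= e * D by rewrite mulr_ge0 // ltW.
  lra.
move=> c c0 c6.
set B := \sum_i \sum_j `|(v i j)%:~R : R|.
have B0 : 0 <= B by apply: sumr_ge0 => i _; apply: sumr_ge0.
have hub : forall (x : 'rV[R]_n) i, `|ip (v i) x| <= B * enorm x.
  move=> x i; apply: le_trans (ip_bound _ _) _; apply: ler_wpM2r.
    by rewrite /enorm sqrtr_ge0.
  by rewrite /B (bigD1 i) //= lerDl; apply: sumr_ge0 => j _; apply: sumr_ge0.
set C0 := \sum_(i < r | P i) (B ^+ 3 / s i ^+ 2 + B / s i).
have C00 : 0 <= C0.
  apply: sumr_ge0 => i Pi; have s0 := hsP i Pi.
  by rewrite addr_ge0 // divr_ge0 // ?exprn_ge0 // ltW.
set al := 2^-1 - 3%:R * c.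
have al0 : 0 < al by rewrite /al; lra.
set T := (4 * C0 + 1) `^ al^-1.
have T0 : 0 <= T by exact: powR_ge0.
exists (4 * C0 + 1); split; first lra.
exists (maxn 1 (Num.bound T)) => k x hk xL hx.
have k1 : (1 <= k)%N by apply: leq_trans hk; exact: leq_maxl.
have k0 : (0 < k)%N by [].
have kT : T <= k%:R.
  apply: ltW; apply: lt_le_trans (archi_boundP T0) _; rewrite ler_nat.
  apply: leq_trans hk; exact: leq_maxr.
set kR := (k%:R : R).
have kR1 : 1 <= kR by rewrite /kR ler1n.
set rho := Num.sqrt kR.
have r0 : 0 < rho by rewrite sqrtr_gt0; lra.
set pk := kR `^ c.
have pk1 : 1 <= pk.
  by have := ler_powR kR1 (ltW c0); rewrite powRr0.
set th := kR `^ (3%:R * c - 2%:R^-1).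
have th_eq : th = pk ^+ 3 / rho.
  rewrite /th powRD; last by apply/implyP => _; rewrite gt_eqF //; lra.
  rewrite powRN powR12_sqrt; last lra.
  have -> : pk ^+ 3 = kR `^ (3%:R * c) by rewrite -powR_mulrn ?powR_ge0 // -powRrM mulrC.
  by [].
have th_al : th * kR `^ al = 1.
  rewrite /th (_ : 3%:R * c - 2%:R^-1 = - al); last by rewrite /al; ring.
  by rewrite powRN mulVf // gt_eqF // powR_gt0 //; lra.
have kal : 4 * C0 + 1 <= kR `^ al.
  have := ge0_ler_powR (ltW al0) (_ : T \is Num.nneg) (_ : kR \is Num.nneg) kT.
  rewrite /T -powRrM mulVf ?gt_eqF // powRr1; last lra.
  by apply; rewrite nnegrE //; lra.
have th0 : 0 < th by rewrite /th powR_gt0 //; lra.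
have hC0th : 4 * C0 * th <= 1.
  rewrite -th_al; have := ler_wpM2l (ltW th0) kal; nra.
set d := \sum_(i < r | P i) (`|ip (v i) x| ^+ 3 / (s i ^+ 2 * rho) + `|ip (v i) x| / (s i * rho)).
have hdC : d <= C0 * th.
  rewrite th_eq /C0 mulr_suml; apply: ler_sum => i Pi.
  have s0 := hsP i Pi.
  have hu : `|ip (v i) x| <= B * pk.
    apply: le_trans (hub x i) _; apply: ler_wpM2l => //; exact: ltW.
  have hu3 : `|ip (v i) x| ^+ 3 <= B ^+ 3 * pk ^+ 3.
    rewrite -exprMn; apply: lerXn2r => //; rewrite nnegrE // mulr_ge0 //; lra.
  have pk3 : pk <= pk ^+ 3 by rewrite !exprS expr0 mulr1; nra.
  have hu1 : `|ip (v i) x| <= B * pk ^+ 3.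
    apply: le_trans hu _; apply: ler_wpM2l => //.
  have -> : (B ^+ 3 / s i ^+ 2 + B / s i) * (pk ^+ 3 / rho) =
     B ^+ 3 * pk ^+ 3 / (s i ^+ 2 * rho) + B * pk ^+ 3 / (s i * rho).
    field; by rewrite ?gt_eqF ?s0 ?r0.
  apply: lerD; rewrite ler_pM2r // invr_gt0 mulr_gt0 // exprn_gt0 //.
have hd : d <= 4^-1 by nra.
have := hest k x xL k0; rewrite /= -/kR -/rho -/d => /(_ hd) [_ h2].
apply: le_trans h2 _.
rewrite -/th.
have Ex0 := E0 x.
have : 4 * E x * d <= 4 * E x * (C0 * th) by rewrite ler_wpM2l // mulr_ge0 // ltW.
have : 0 <= E x * th by rewrite mulr_ge0 // ltW.
nra.
Qed.
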